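(* Consider a system of $n$ equations $x_i=f_i$ ($i=1,\dots,n$) over a directed set $\mathbb D$ where all right-hand sides $f_i:(\{x_1,\dots,x_n\}\to\mathbb D)\to\mathbb D$ are monotonic, and run algorithm SRR (defined below) from an arbitrary initial mapping $\rho_0$ by calling $\mathsf{solve}(n)$. Then: (1) If $\mathbb D$ has height $h$ and $\Box=\sqcup$ is a binary upper bound operator on $\mathbb D$, then SRR terminates with a post solution after at most $n+\frac h2 n(n+1)$ evaluations of right-hand sides. (2) If $\Box=\boxdot$ (for arbitrary widening $\nabla$ and narrowing $\triangle$, and $\mathbb D$ possibly having infinite ascending chains), SRR terminates and returns a post solution.
   Context: Algorithm SRR (structured round-robin) with binary operator $\Box$, maintaining a global mapping $\rho$: the recursive procedure $\mathsf{solve}(i)$ does: if $i=0$ return; call $\mathsf{solve}(i-1)$; compute $new:=\rho[x_i]\,\Box\, f_i\,\rho$ (one evaluation of a right-hand side); if $\rho[x_i]\neq new$ then set $\rho[x_i]:=new$ and call $\mathsf{solve}(i)$. A directed set is a poset in which any two elements have an upper bound; a binary upper bound operator $\sqcup$ returns some upper bound $a\sqcup b\sqsupseteq a,b$. $\mathbb D$ has height $h$ if $h$ is the maximal length of a strictly increasing chain $d_0\sqsubset d_1\sqsubset\dots\sqsubset d_h$. Monotonic: $\rho\sqsubseteq\rho'$ pointwise implies $f\rho\sqsubseteq f\rho'$. Post solution: $\rho[x_i]\sqsupseteq f_i\rho$ for all $i$. A widening operator is a binary operator $\nabla$ on $\mathbb D$ with $a\sqsubseteq a\nabla b$ and $b\sqsubseteq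 a\nabla b$ for all $a,b$, such that there is no infinite sequence $a_0,a_1,\dots$ with $a_{i+1}=a_i\nabla b_i$ and $a_{i+1}\neq a_i$ for all $i$. A narrowing operator is a binary operator $\triangle$ such that $b\sqsubseteq a$ implies $b\sqsubseteq a\triangle b\sqsubseteq a$, and there is no infinite sequence with $b_i\sqsubseteq a_i$, $a_{i+1}=a_i\triangle b_i$, $a_{i+1}\ne a_i$ for all $i$. $a\boxdot b=a\triangle b$ if $b\sqsubseteq a$, else $a\nabla b$. *)

(* Defs.v *)
From HB Require Import structures.
From mathcomp Require Import all_boot all_order.
Set Implicit Arguments. Unset Strict Implicit. Unset Printing Implicit Defensive.
Import Order.TTheory.
Local Open Scope order_scope.

Section SRR.
Context {disp : Order.disp_t} {D : porderType disp}.

Definition directed : Prop := forall a b : D, exists c : D, a <= c /\ b <= c.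

Definition upper_bound_op (join : D -> D -> D) : Prop :=
  forall a b : D, a <= join a b /\ b <= join a b.

Definition has_height (h : nat) : Prop :=
  (exists c : nat -> D, forall i, (i < h)%N -> c i < c i.+1) /\
  (forall (m : nat) (c : nat -> D), (forall i, (i < m)%N -> c i < c i.+1) -> (m <= h)%N).

Definition is_widening (w : D -> D -> D) : Prop :=
  (forall a b : D, a <= w a b /\ b <= w a b) /\
  ~ (exists a b : nat -> D, forall i, a i.+1 = w (a i) (b i) /\ a i.+1 <> a i).

Definition is_narrowing (nr : D -> D -> D) : Prop :=
  (forall a b : D, b <= a -> b <= nr a b /\ nr a b <= a) /\
  ~ (exists a b : nat -> D,
        forall i, b i <= a i /\ a i.+1 = nr (a i) (b i) /\ a i.+1 <> a i).

Definition boxdot (w nr : D -> D -> D) (a b : D) : D :=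
  if b <= a then nr a b else w a b.

Variable n : nat.

(* mappings rho : {x_1..x_n} -> D ; variable x_{i+1} is the ordinal i *)
Definition monotonic (g : ('I_n -> D) -> D) : Prop :=
  forall rho rho' : 'I_n -> D, (forall j, rho j <= rho' j) -> g rho <= g rho'.

Definition post_solution (f : 'I_n -> ('I_n -> D) -> D) (rho : 'I_n -> D) : Prop :=
  forall i, f i rho <= rho i.

Definition upd (rho : 'I_n -> D) (i : 'I_n) (v : D) : 'I_n -> D :=
  fun j => if j == i then v else rho j.

(* Big-step semantics of SRR: [solve_rel box f i rho rho' k] means that the
   call solve(i) started with global mapping rho terminates, leaving the global
   mapping rho', after exactly k evaluations of right-hand sides.
   solve(i.+1) processes the variable x_{i+1}, i.e. the ordinal i. *)
Inductive solve_rel (box : D -> D -> D) (f : 'I_n -> ('I_n -> D) -> D)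
  : nat -> ('I_n -> D) -> ('I_n -> D) -> nat -> Prop :=
| solve_zero : forall rho, solve_rel box f 0 rho rho 0
| solve_stable : forall (i : 'I_n) rho rho1 k1,
    solve_rel box f i rho rho1 k1 ->
    box (rho1 i) (f i rho1) = rho1 i ->
    solve_rel box f i.+1 rho rho1 (k1 + 1)
| solve_change : forall (i : 'I_n) rho rho1 rho2 k1 k2,
    solve_rel box f i rho rho1 k1 ->
    box (rho1 i) (f i rho1) <> rho1 i ->
    solve_rel box f i.+1 (upd rho1 i (box (rho1 i) (f i rho1))) rho2 k2 ->
    solve_rel box f i.+1 rho rho2 (k1 + 1 + k2).

End SRR.

(* Main.v *)
Require Import Defs.
From HB Require Import structures.
From mathcomp Require Import all_boot all_order.
From mathcomp Require Import zify.
From Stdlib Require Import ClassicalEpsilon Classical.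
Import Order.TTheory.
Local Open Scope order_scope.

Section Aux.
Set Implicit Arguments. Unset Strict Implicit.
Context {disp : Order.disp_t} {D : porderType disp} {n : nat}.
Implicit Types (rho : 'I_n -> D) (f : 'I_n -> ('I_n -> D) -> D).

Lemma sr_unch box f m rho rho' k : solve_rel box f m rho rho' k ->
  forall j : 'I_n, (m <= j)%N -> rho' j = rho j.
Proof.
elim=> {m rho rho' k} [rho|i rho rho1 k1 _ IH _|i rho rho1 rho2 k1 k2 _ IH1 _ _ IH2] j hj.
- done.
- by apply: IH; apply: ltnW.
- rewrite IH2 // /upd; case: eqP => [eji|_]; first by move: hj; rewrite eji ltnn.
  by apply: IH1; apply: ltnW.
Qed.

Lemma sr_post box f m rho rho' k : solve_rel box f m rho rho' k ->
  (forall a b, box a b = a -> b <= a) ->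
  forall j : 'I_n, (j < m)%N -> f j rho' <= rho' j.
Proof.
move=> Hs Hb; elim: Hs => {m rho rho' k} [rho|i rho rho1 k1 _ IH Hst|i rho rho1 rho2 k1 k2 _ IH1 _ _ IH2] j hj.
- by [].
- rewrite ltnS leq_eqVlt in hj; case/orP: hj => [/eqP/val_inj->|hj]; last exact: IH.
  exact: Hb.
- exact: IH2.
Qed.

Definition Rch (a b : D) (m : nat) := exists c : nat -> D,
  c 0%N = a /\ c m = b /\ forall t, (t < m)%N -> c t < c t.+1.

Lemma Rch_refl a : Rch a a 0.
Proof. by exists (fun _ => a). Qed.

Lemma Rch0 a b : Rch a b 0 -> a = b.
Proof. by case=> c [<- [<- _]]. Qed.

Lemma Rch_step a b : a < b -> Rch a b 1.
Proof.
move=> ab; exists (fun t => if t == 0%N then a else b); split => //; split => //.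
by case.
Qed.

Lemma Rch_cat a b d m m' : Rch a b m -> Rch b d m' -> Rch a d (m + m').
Proof.
case=> c [c0 [cm cs]] [c' [c'0 [c'm c's]]].
exists (fun t => if (t <= m)%N then c t else c' (t - m)); split.
  by rewrite leq0n.
split.
  case: (leqP (m + m') m) => h.
    have m'0 : m' = 0%N by move: h; rewrite -{2}(addn0 m) leq_add2l leqn0 => /eqP.
    by rewrite m'0 addn0 cm -c'0 -c'm m'0.
  by rewrite addKn.
move=> t ht; case: (ltnP t m) => h1.
  by rewrite (ltnW h1); apply: cs.
case: (eqVneq t m) => [->|ne].
  rewrite leqnn subSn // subnn cm -c'0; apply: c's.
  by move: ht; lia.
have h2 : (m < t)%N by rewrite ltn_neqAle eq_sym ne h1.
rewrite leqNgt h2 /= subSn ?(ltnW h2) //; apply: c's; lia.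
Qed.

Lemma Rch_upd rho (i j : 'I_n) v : rho i < v -> Rch (rho j) (upd rho i v j) (j == i).
Proof.
move=> h; rewrite /upd; case: eqP => [->|_] /=; first exact: Rch_step.
exact: Rch_refl.
Qed.

Lemma Rch_height h a b m : has_height (D := D) h -> Rch a b m -> (m <= h)%N.
Proof. by case=> _ H [c [_ [_ hc]]]; apply: (H m c). Qed.


Lemma sum_bool (i : 'I_n) : (\sum_(j < n) j.+1 * (j == i) = i.+1)%N.
Proof.
rewrite (bigD1 i) //= eqxx muln1 big1 ?addn0 // => j /negbTE ->.
by rewrite muln0.
Qed.

Lemma sr_bound join f m rho rho' k : upper_bound_op join ->
  solve_rel join f m rho rho' k ->
  exists C : 'I_n -> nat, (forall j, Rch (rho j) (rho' j) (C j) /\ ((m <= j)%N -> C j = 0%N))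
    /\ (k <= m + \sum_(j < n) j.+1 * C j)%N.
Proof.
move=> Hj; elim=> {m rho rho' k} [rho|i rho rho1 k1 _ IH Hst|i rho rho1 rho2 k1 k2 _ IH1 Hch _ IH2].
- exists (fun _ => 0%N); split; first by move=> j; split=> //; apply: Rch_refl.
  by [].
- case: IH => C [HC Hk]; exists C; split.
    move=> j; case: (HC j) => h1 h2; split => // hj; apply: h2; exact: ltnW.
  move: Hk; lia.
- case: IH1 => C1 [HC1 Hk1]; case: IH2 => C2 [HC2 Hk2].
  set v := join (rho1 i) (f i rho1) in Hch HC2 Hk2 *.
  have lt1 : rho1 i < v.
    rewrite lt_neqAle; apply/andP; split; first by apply/negP => /eqP h; apply: Hch; rewrite h.
    exact: (Hj (rho1 i) (f i rho1)).1.
  exists (fun j => C1 j + (j == i) + C2 j)%N; split.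
    move=> j; case: (HC1 j) => h1 h1'; case: (HC2 j) => h2 h2'; split.
      apply: Rch_cat h2; apply: Rch_cat h1 _; exact: Rch_upd.
    move=> hj; rewrite h1' ?h2' ?(ltnW hj) //.
    have -> : (j == i) = false.
      by apply/negbTE; apply/eqP => eji; move: hj; rewrite eji ltnn.
    by [].
  have -> : (\sum_(j < n) j.+1 * (C1 j + (j == i) + C2 j) =
     \sum_(j < n) j.+1 * C1 j + \sum_(j < n) j.+1 * (j == i) + \sum_(j < n) j.+1 * C2 j)%N.
    by rewrite -!big_split /=; apply: eq_bigr => j _; rewrite !mulnDr.
  rewrite sum_bool; move: Hk1 Hk2; lia.
Qed.


Lemma upd_le rho (i : 'I_n) v : v <= rho i -> forall j, upd rho i v j <= rho j.
Proof. by move=> h j; rewrite /upd; case: eqP => [->|_]. Qed.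

Lemma boxdot_prop w nr : is_widening w -> forall a b : D, boxdot w nr a b = a -> b <= a.
Proof.
move=> Hw a b e; apply/idPn => nb; move: e; rewrite /boxdot (negbTE nb) => e.
by move: nb; rewrite -e (Hw.1 a b).2.
Qed.

Lemma sr_dec w nr f m rho rho' k : is_widening w -> is_narrowing nr ->
  (forall i, monotonic (f i)) -> solve_rel (boxdot w nr) f m rho rho' k ->
  (forall j : 'I_n, (j < m)%N -> f j rho <= rho j) -> forall j, rho' j <= rho j.
Proof.
move=> Hw Hn Hm; elim=> {m rho rho' k} [rho|i rho rho1 k1 _ IH _|i rho rho1 rho2 k1 k2 Hs1 IH1 _ _ IH2] hp.
- by move=> j.
- by apply: IH => j hj; apply: hp; apply: leqW.
- have le1 : forall j, rho1 j <= rho j by apply: IH1 => j hj; apply: hp; apply: leqW.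
  have e1 : rho1 i = rho i by exact: (sr_unch Hs1 (leqnn _)).
  have hba : f i rho1 <= rho1 i.
    by rewrite e1; apply: le_trans (hp i (ltnSn _)); apply: Hm.
  have pst := sr_post Hs1 (boxdot_prop (nr:=nr) Hw).
  move: IH2; rewrite /boxdot hba => IH2.
  have [n1 n2] := Hn.1 _ _ hba.
  have le2 := upd_le n2.
  move=> j; apply: le_trans (le1 j); apply: le_trans (le2 j); apply: IH2 => j' hj'.
  case: (eqVneq j' i) => [->|ne].
    rewrite {2}/upd eqxx; apply: le_trans n1; exact: Hm.
  rewrite {2}/upd (negbTE ne); apply: le_trans (pst j' _); first exact: Hm.
  by rewrite ltnS leq_eqVlt in hj'; case/orP: hj' => // /eqP /val_inj; move/eqP: ne.
Qed.

Lemma dep_seq {A : Type} (P : A -> Prop) (Q : A -> A -> Prop) :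
  (forall x, P x -> exists y, P y /\ Q x y) ->
  forall x0, P x0 -> exists s : nat -> A, forall t, P (s t) /\ Q (s t) (s t.+1).
Proof.
move=> H x0 Px0.
pose g : {x | P x} -> {x | P x} := fun x =>
  let e := constructive_indefinite_description _ (H _ (proj2_sig x)) in
  exist _ (proj1_sig e) (proj1 (proj2_sig e)).
exists (fun t => proj1_sig (iter t g (exist _ x0 Px0))) => t; split.
  exact: proj2_sig.
rewrite iterS /g /=.
set e := constructive_indefinite_description _ _.
exact: (proj2 (proj2_sig e)).
Qed.

Lemma sr_ex_step box f (i : 'I_n) :
  (forall rho, exists rho1 k, solve_rel box f i rho rho1 k) ->
  (forall R R1 : nat -> ('I_n -> D),
     (forall t, (exists k, solve_rel box f i (R t) (R1 t) k) /\
        box (R1 t i) (f i (R1 t)) <> R1 t i /\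
        R t.+1 = upd (R1 t) i (box (R1 t i) (f i (R1 t)))) -> False) ->
  forall rho, exists rho' k, solve_rel box f i.+1 rho rho' k.
Proof.
move=> Hi Hinf rho; apply: NNPP => Hst.
have [rho1 [k1 Hs1]] := Hi rho.
pose P (p : ('I_n -> D) * ('I_n -> D)) :=
  (~ exists rho' k, solve_rel box f i.+1 p.1 rho' k) /\ exists k, solve_rel box f i p.1 p.2 k.
pose Q (p q : ('I_n -> D) * ('I_n -> D)) :=
  box (p.2 i) (f i p.2) <> p.2 i /\ q.1 = upd p.2 i (box (p.2 i) (f i p.2)).
have step : forall x, P x -> exists y, P y /\ Q x y.
  move=> [r r1] [/= stk [k Hk]].
  case: (eqVneq (box (r1 i) (f i r1)) (r1 i)) => [e|/eqP ne].
    by case: stk; exists r1, (k + 1)%N; apply: solve_stable.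
  set r' := upd r1 i (box (r1 i) (f i r1)).
  have [r1' [k' Hk']] := Hi r'.
  exists (r', r1'); split => //; split => /=; last by exists k'.
  move=> [rho' [k2 H2]]; apply: stk; exists rho', (k + 1 + k2)%N.
  exact: solve_change H2.
have [s Hs] := dep_seq step (x0 := (rho, rho1)) (conj Hst (ex_intro _ k1 Hs1)).
apply: (Hinf (fun t => (s t).1) (fun t => (s t).2)) => t.
by case: (Hs t) => [[_ ?] [? ?]].
Qed.

Lemma seq_i box f (i : 'I_n) (R R1 : nat -> ('I_n -> D)) t :
  (exists k, solve_rel box f i (R t) (R1 t) k) /\
        box (R1 t i) (f i (R1 t)) <> R1 t i /\
        R t.+1 = upd (R1 t) i (box (R1 t i) (f i (R1 t))) ->
  R1 t i = R t i /\ R t.+1 i = box (R t i) (f i (R1 t)) /\ box (R t i) (f i (R1 t)) <> R t i.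
Proof.
move=> [[k Hk] [ne e]].
have e1 : R1 t i = R t i by exact: (sr_unch Hk (leqnn _)).
by rewrite e /upd eqxx -e1.
Qed.

End Aux.

Lemma tri m : (2 * \sum_(j < m) j.+1 = m * m.+1)%N.
Proof.
elim: m => [|m IH]; first by rewrite big_ord0.
rewrite big_ord_recr /= mulnDr IH; lia.
Qed.

Theorem mainTheorem4 (disp : Order.disp_t) (D : porderType disp) (n : nat)
  (f : 'I_n -> ('I_n -> D) -> D) (rho0 : 'I_n -> D) :
  directed (D := D) ->
  (forall i, monotonic (f i)) ->
  (* (1) upper bound operator, finite height h *)
  (forall (h : nat) (join : D -> D -> D),
      has_height (D := D) h -> upper_bound_op join ->
      (exists rho k, solve_rel join f n rho0 rho k) /\
      (forall rho k, solve_rel join f n rho0 rho k ->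
         post_solution f rho /\ (2 * k <= 2 * n + h * (n * n.+1))%N)) /\
  (* (2) box = widening/narrowing combination *)
  (forall (w nr : D -> D -> D),
      is_widening w -> is_narrowing nr ->
      (exists rho k, solve_rel (boxdot w nr) f n rho0 rho k) /\
      (forall rho k, solve_rel (boxdot w nr) f n rho0 rho k ->
         post_solution f rho)).
Proof.
move=> _ Hm.
have Hex : forall box, (forall (i : 'I_n) (R R1 : nat -> ('I_n -> D)),
     (forall t, (exists k, solve_rel box f i (R t) (R1 t) k) /\
        box (R1 t i) (f i (R1 t)) <> R1 t i /\
        R t.+1 = upd (R1 t) i (box (R1 t i) (f i (R1 t)))) -> False) ->
    exists rho k, solve_rel box f n rho0 rho k.
  move=> box Hinf.
  suff: forall m, (m <= n)%N -> forall rho, exists rho' k, solve_rel box f m rho rho' k.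
    by move=> H; apply: H.
  elim=> [|m IH] hm rho; first by exists rho, 0%N; apply: solve_zero.
  exact: (sr_ex_step (i := Ordinal hm) (IH (ltnW hm)) (@Hinf (Ordinal hm)) rho).
split.
- move=> h join Hh Hj; split.
    apply: Hex => i R R1 HR.
    have lt : forall t, R t i < R t.+1 i.
      move=> t; have [_ [e ne]] := seq_i (HR t).
      rewrite e lt_neqAle; apply/andP; split; last exact: (Hj _ _).1.
      by apply/negP => /eqP ee; apply: ne; rewrite -ee.
    have := Hh.2 h.+1 (fun t => R t i) (fun t _ => lt t).
    by rewrite ltnn.
  move=> rho k Hs; split.
    move=> j; apply: (sr_post Hs) => // a b e.
    by rewrite -e; exact: (Hj a b).2.
  have [C [HC Hk]] := sr_bound Hj Hs.
  have le : (\sum_(j < n) j.+1 * C j <= \sum_(j < n) j.+1 * h)%N.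
    apply: leq_sum => j _; apply: leq_mul => //.
    exact: Rch_height Hh (HC j).1.
  have e : (2 * \sum_(j < n) j.+1 * h = h * (n * n.+1))%N.
    by rewrite -big_distrl /= mulnA tri mulnC.
  move: Hk le e; lia.
- move=> w nr Hw Hn; split.
    apply: Hex => i R R1 HR.
    pose a t := R t i; pose b t := f i (R1 t).
    have Ha : forall t, a t.+1 = boxdot w nr (a t) (b t) /\ a t.+1 <> a t.
      by move=> t; have [_ [e ne]] := seq_i (HR t); rewrite /a e.
    case: (classic (exists t, b t <= a t)) => [[t0 ht0]|nex].
      have inv : forall s, b (t0 + s)%N <= a (t0 + s)%N.
        elim=> [|s IH]; first by rewrite addn0.
        rewrite addnS; set t := (t0 + s)%N in IH *.
        have [[k Hk] [_ eR]] := HR t.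
        have [e1 _] := seq_i (HR t).
        have pst := sr_post Hk (boxdot_prop (nr:=nr) Hw).
        have [n1 n2] := Hn.1 _ _ IH.
        have eR' : R t.+1 = upd (R1 t) i (nr (a t) (b t)).
          by rewrite eR e1 /boxdot -/(a t) -/(b t) IH.
        have le1 : forall j, R t.+1 j <= R1 t j.
          by rewrite eR'; apply: upd_le; rewrite e1.
        have [[k' Hk'] _] := HR t.+1.
        have le2 : forall j, R1 t.+1 j <= R t.+1 j.
          apply: (sr_dec Hw Hn Hm Hk') => j hj.
          have nji : j != i by apply/eqP => eji; move: hj; rewrite eji ltnn.
          apply: le_trans (Hm j _ _ le1) _.
          rewrite eR' /upd (negbTE nji); exact: pst.
        rewrite /b; apply: le_trans (Hm i _ _ (fun j => le_trans (le2 j) (le1 j))) _.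
        apply: le_trans n1 _.
        by rewrite /a eR' /upd eqxx.
      apply: Hn.2; exists (fun s => a (t0 + s)%N), (fun s => b (t0 + s)%N) => s.
      have [e ne] := Ha (t0 + s)%N.
      split; first exact: inv.
      split; last by rewrite addnS.
      by rewrite addnS e /boxdot (inv s).
    apply: Hw.2; exists a, b => t.
    have [e ne] := Ha t.
    have nb : ~~ (b t <= a t) by apply/negP => h; apply: nex; exists t.
    by move: e ne; rewrite /boxdot (negbTE nb) => e; rewrite e => ne.
  move=> rho k Hs j; apply: (sr_post Hs) => //.
  exact: boxdot_prop.
Qed.
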